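(* Let $\mathcal{L}_\to\subseteq\{\land,\lor,\to,\lnot,0,1\}$ be a language containing $\to$ and $\Phi$ a Sahlqvist quasiequation in $\mathcal{L}_\to$. If an $\mathcal{L}_\to$-subreduct $\boldsymbol{A}$ of a Heyting algebra validates $\mathsf{A}(\Phi)$, then the Heyting algebra $\mathsf{Up}(\boldsymbol{A}_\ast)$ validates $\mathsf{A}(\Phi)$.
   Context: An $\mathcal{L}_\to$-subreduct of a Heyting algebra is a subalgebra of its $\mathcal{L}_\to$-reduct; in it $x\to x$ is constant with value $1$, a formula $\varphi$ is valid if $\varphi\approx1$ holds, and a set of formulas is valid if each member is. An implicative filter of $\boldsymbol{A}$ is $F\subseteq A$ with $1\in F$ and $a,a\to b\in F\Rightarrow b\in F$; $\boldsymbol{A}_\ast$ is the poset under inclusion of meet irreducible implicative filters (proper, not the intersection of two implicative filters both different from it). $\mathsf{Up}(\mathbb{X})$ is the Heyting algebra of upsets of a poset $\mathbb{X}$ ($\cap,\cup$, $U\to V=X\smallsetminus{\downarrow}(U\smallsetminus V)$, $\emptyset$, $X$). Sahlqvist quasiequations: formulas over variables with $\land,\lor,\to,\lnot,0,1$; a variable occurrence is positive (negative) if the number of negations and implication antecedents in whose scope it lies is even (odd); positive/negative formulas have all occurrences so. Sahlqvist antecedent: built from variables, negative formulas, $0,1$ by $\land,\lor$. Sahlqvist implication: positive formula, or $\lnot\varphi$ with $\varphi$ a Sahlqvist antecedent, or $\varphi\to\psi$ with $\varphi$ a Sahlqvist antecedent and $\psi$ positive. $\Phi=\varphi_1\land y\le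 z\,\&\cdots\&\,\varphi_m\land y\le z\Longrightarrow y\le z$, $y,z$ distinct variables not in the $\varphi_i$, each $\varphi_i$ built from Sahlqvist implications by $\land,\lor$, $a\le b$ meaning $a\land b\approx a$; $\Phi$ is in $\mathcal{L}_\to$ if the $\varphi_i$ only use symbols of $\mathcal{L}_\to$. For each formula $\varphi(x_1..x_n)$ and $k\ge1$, $\boldsymbol{\varphi}^k$ is the finite set: $\boldsymbol{x_m}^k=\{x_m^1..x_m^k\}$; $\boldsymbol{1}^k=\{x_1^1\to x_1^1\}$; $\boldsymbol{0}^k=\{x_1^1,x_1^1\to0\}$; $(\boldsymbol{\psi\land\chi})^k=\boldsymbol{\psi}^k\cup\boldsymbol{\chi}^k$; with $\boldsymbol{\psi}^k=\{\psi_1..\psi_p\}$, $\boldsymbol{\chi}^k=\{\chi_1..\chi_t\}$: $(\boldsymbol{\lnot\psi})^k=\{\psi_1\to(\cdots(\psi_p\to0)\cdots)\}$, $(\boldsymbol{\psi\to\chi})^k=\{\psi_1\to(\cdots(\psi_p\to\chi_j)\cdots):j\le t\}$, $(\boldsymbol{\psi\lor\chi})^k=\{\psi_i\lor\chi_j:i\le p,j\le t\}$. For finite $\Gamma=\{\gamma_1..\gamma_n\}$, $\Gamma\to\varphi$ denotes $\{\gamma_1\to(\cdots(\gamma_n\to\varphi)\cdots)\}$. $\mathsf{A}(\Phi)=\bigcup_{k\ge1}\big(((\boldsymbol{\varphi_1}^k\to y)\cup\cdots\cup(\boldsymbol{\varphi_m}^k\to y))\to y\big)$, $y$ a variable not occurring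 in the $\boldsymbol{\varphi_i}^k$. *)

(* Defs.v *)
From HB Require Import structures.
From mathcomp Require Import all_boot all_order.
Set Implicit Arguments. Unset Strict Implicit. Unset Printing Implicit Defensive.
Import Order.Theory.
Local Open Scope order_scope.

Definition heyting_imp (d : Order.disp_t) (H : tbLatticeType d)
  (imp : H -> H -> H) : Prop :=
  forall a b c : H, (c `&` a <= b) = (c <= imp a b).

Inductive fm (V : Type) : Type :=
| FVar of V
| FAnd of fm V & fm V
| FOr of fm V & fm V
| FImp of fm V & fm V
| FNeg of fm V
| FZero
| FOne.
Arguments FZero {V}.
Arguments FOne {V}.

Fixpoint fm_map (V W : Type) (f : V -> W) (p : fm V) : fm W :=
  match p with
  | FVar x => FVar (f x)
  | FAnd a b => FAnd (fm_map f a) (fm_map f b)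
  | FOr a b => FOr (fm_map f a) (fm_map f b)
  | FImp a b => FImp (fm_map f a) (fm_map f b)
  | FNeg a => FNeg (fm_map f a)
  | FZero => FZero
  | FOne => FOne
  end.

Fixpoint fm_vars (V : Type) (p : fm V) : seq V :=
  match p with
  | FVar x => [:: x]
  | FAnd a b | FOr a b | FImp a b => fm_vars a ++ fm_vars b
  | FNeg a => fm_vars a
  | FZero | FOne => [::]
  end.

(* A language L_-> with  -> in L_-> subset {/\, \/, ->, ~, 0, 1}. *)
Record lang := Lang { l_and : bool; l_or : bool; l_neg : bool;
                      l_zero : bool; l_one : bool }.

Fixpoint in_lang (L : lang) (V : Type) (p : fm V) : bool :=
  match p with
  | FVar _ => true
  | FAnd a b => l_and L && in_lang L a && in_lang L b
  | FOr a b => l_or L && in_lang L a && in_lang L b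
  | FImp a b => in_lang L a && in_lang L b
  | FNeg a => l_neg L && in_lang L a
  | FZero => l_zero L
  | FOne => l_one L
  end.

Fixpoint eval (d : Order.disp_t) (H : tbLatticeType d) (imp : H -> H -> H)
  (V : Type) (v : V -> H) (p : fm V) : H :=
  match p with
  | FVar x => v x
  | FAnd a b => eval imp v a `&` eval imp v b
  | FOr a b => eval imp v a `|` eval imp v b
  | FImp a b => imp (eval imp v a) (eval imp v b)
  | FNeg a => imp (eval imp v a) \bot
  | FZero => \bot
  | FOne => \top
  end.

(* S (a subset of H) is (the universe of) a subalgebra of the
   L_->-reduct of the Heyting algebra (H, imp): nonempty and closed
   under the operations of L_->. *)
Definition subreduct (L : lang) (d : Order.disp_t) (H : tbLatticeType d)
  (imp : H -> H -> H) (S : H -> Prop) : Prop :=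
  (exists a, S a) /\
  (forall a b, S a -> S b -> S (imp a b)) /\
  (l_and L -> forall a b, S a -> S b -> S (a `&` b)) /\
  (l_or L -> forall a b, S a -> S b -> S (a `|` b)) /\
  (l_neg L -> forall a, S a -> S (imp a \bot)) /\
  (l_zero L -> S \bot) /\
  (l_one L -> S \top).

Definition valid_sub (d : Order.disp_t) (H : tbLatticeType d)
  (imp : H -> H -> H) (S : H -> Prop) (V : Type) (p : fm V) : Prop :=
  forall v : V -> H, (forall x, S (v x)) -> eval imp v p = \top.

Definition valid_sub_set (d : Order.disp_t) (H : tbLatticeType d)
  (imp : H -> H -> H) (S : H -> Prop) (V : Type) (P : fm V -> Prop) : Prop :=
  forall p, P p -> valid_sub imp S p.

Definition impl_filter (d : Order.disp_t) (H : tbLatticeType d)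
  (imp : H -> H -> H) (S : H -> Prop) (F : H -> Prop) : Prop :=
  [/\ forall a, F a -> S a,
      F \top &
      forall a b, S a -> S b -> F a -> F (imp a b) -> F b].

Definition mi_filter (d : Order.disp_t) (H : tbLatticeType d)
  (imp : H -> H -> H) (S : H -> Prop) (F : H -> Prop) : Prop :=
  [/\ impl_filter imp S F,
      exists2 a, S a & ~ F a &
      forall G1 G2, impl_filter imp S G1 -> impl_filter imp S G2 ->
        (forall a, F a <-> (G1 a /\ G2 a)) ->
        (forall a, F a <-> G1 a) \/ (forall a, F a <-> G2 a)].

Definition dual_space (d : Order.disp_t) (H : tbLatticeType d)
  (imp : H -> H -> H) (S : H -> Prop) : Type :=
  {F : H -> Prop | mi_filter imp S F}.

Definition dual_le (d : Order.disp_t) (H : tbLatticeType d)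
  (imp : H -> H -> H) (S : H -> Prop) (F G : dual_space imp S) : Prop :=
  forall a, proj1_sig F a -> proj1_sig G a.

Definition upset (X : Type) (le : X -> X -> Prop) (U : X -> Prop) : Prop :=
  forall x y, le x y -> U x -> U y.

(* Evaluation in Up(X): meet = intersection, join = union,
   U -> W = X \ down(U \ W), 0 = empty, 1 = X, ~U = U -> 0. *)
Fixpoint eval_up (X : Type) (le : X -> X -> Prop) (V : Type)
  (v : V -> X -> Prop) (p : fm V) : X -> Prop :=
  match p with
  | FVar x => v x
  | FAnd a b => fun x => eval_up le v a x /\ eval_up le v b x
  | FOr a b => fun x => eval_up le v a x \/ eval_up le v b x
  | FImp a b => fun x =>
      ~ (exists y, le x y /\ eval_up le v a y /\ ~ eval_up le v b y)
  | FNeg a => fun x => ~ (exists y, le x y /\ eval_up le v a y /\ ~ False)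
  | FZero => fun _ => False
  | FOne => fun _ => True
  end.

Definition valid_up (X : Type) (le : X -> X -> Prop) (V : Type)
  (p : fm V) : Prop :=
  forall v : V -> X -> Prop, (forall x, upset le (v x)) ->
    forall x, eval_up le v p x.

Definition valid_up_set (X : Type) (le : X -> X -> Prop) (V : Type)
  (P : fm V -> Prop) : Prop :=
  forall p, P p -> valid_up le p.

Fixpoint polar (V : Type) (b : bool) (p : fm V) : bool :=
  match p with
  | FVar _ => b
  | FAnd a c | FOr a c => polar b a && polar b c
  | FImp a c => polar (~~ b) a && polar b c
  | FNeg a => polar (~~ b) a
  | FZero | FOne => true
  end.

Definition positive (V : Type) (p : fm V) := polar true p.
Definition negative (V : Type) (p : fm V) := polar false p.

Fixpoint sahl_ante (V : Type) (p : fm V) : bool :=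
  negative p ||
  match p with
  | FVar _ | FZero | FOne => true
  | FAnd a c | FOr a c => sahl_ante a && sahl_ante c
  | _ => false
  end.

Definition sahl_impl (V : Type) (p : fm V) : bool :=
  positive p ||
  match p with
  | FNeg a => sahl_ante a
  | FImp a c => sahl_ante a && positive c
  | _ => false
  end.

Fixpoint sahl_body (V : Type) (p : fm V) : bool :=
  sahl_impl p ||
  match p with
  | FAnd a c | FOr a c => sahl_body a && sahl_body c
  | _ => false
  end.

(* Phi = phi_1 /\ y <= z & ... & phi_m /\ y <= z ==> y <= z is a Sahlqvist
   quasiequation in L_->. It is represented by the list [phis] of the
   phi_i together with the distinct variables y, z. *)
Definition sahlqvist_qe (L : lang) (phis : seq (fm nat)) (y z : nat) : Prop :=
  [/\ (0 < size phis)%N,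
      y != z,
      all (fun p => (y \notin fm_vars p) && (z \notin fm_vars p)) phis,
      all (@sahl_body nat) phis &
      all (@in_lang L nat) phis].

Definition imps (V : Type) (G : seq (fm V)) (p : fm V) : fm V :=
  foldr (@FImp V) p G.

(* The variable x_m^j is (m, j). *)
Fixpoint bold (k : nat) (p : fm nat) : seq (fm (nat * nat)) :=
  match p with
  | FVar m => [seq FVar (m, j) | j <- iota 1 k]
  | FOne => [:: FImp (FVar (1, 1)) (FVar (1, 1))]
  | FZero => [:: FVar (1, 1); FImp (FVar (1, 1)) FZero]
  | FAnd a b => bold k a ++ bold k b
  | FNeg a => [:: imps (bold k a) FZero]
  | FImp a b => [seq imps (bold k a) c | c <- bold k b]
  | FOr a b => [seq FOr a' b' | a' <- bold k a, b' <- bold k b]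
  end.

(* The member of A(Phi) for a given k; the fresh variable y is None,
   the variables x_m^j are Some (m, j). *)
Definition APhi_k (phis : seq (fm nat)) (k : nat) : fm (option (nat * nat)) :=
  let y := FVar (None : option (nat * nat)) in
  imps [seq imps (map (fm_map Some) (bold k p)) y | p <- phis] y.

Definition APhi (phis : seq (fm nat)) : fm (option (nat * nat)) -> Prop :=
  fun a => exists2 k, (0 < k)%N & a = APhi_k phis k.

(* Main.v *)
Require Import Defs.
From mathcomp Require Import all_boot all_order.
From mathcomp Require classical_sets.
From mathcomp Require Import zify.
From Stdlib Require Import Classical.
From Stdlib Require List.
Import Order.Theory.
Local Open Scope order_scope.
Set Implicit Arguments. Unset Strict Implicit.

Fixpoint allp (A : Type) (P : A -> Prop) (l : seq A) : Prop :=
  match l with [::] => True | x :: l' => P x /\ allp P l' end.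

Fixpoint exl (A : Type) (P : A -> Prop) (l : seq A) : Prop :=
  match l with [::] => False | x :: l' => P x \/ exl P l' end.

Lemma allp_cat A (P : A -> Prop) l1 l2 : allp P (l1 ++ l2) <-> allp P l1 /\ allp P l2.
Proof. elim: l1 => [|x l IH] /=; [tauto | rewrite IH; tauto]. Qed.

Lemma allp_map A B (f : A -> B) (P : B -> Prop) l : allp P (map f l) <-> allp (fun x => P (f x)) l.
Proof. elim: l => [|x l IH] /=; [tauto | rewrite IH; tauto]. Qed.

Lemma allp_impl A (P Q : A -> Prop) l : (forall x, P x -> Q x) -> allp P l -> allp Q l.
Proof. move=> PQ; elim: l => [|x l IH] //= [/PQ ? /IH ?]; tauto. Qed.

Lemma allp_iff A (P Q : A -> Prop) l : (forall x, P x <-> Q x) -> (allp P l <-> allp Q l).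
Proof. move=> PQ; split; apply: allp_impl => x; rewrite PQ //. Qed.

Lemma allp_allpairs A B C (f : A -> B -> C) (P : C -> Prop) s t :
  allp P [seq f x y | x <- s, y <- t] <-> allp (fun x => allp (fun y => P (f x y)) t) s.
Proof.
elim: s => [|x s IH] /=; first tauto.
rewrite allp_cat IH allp_map; tauto.
Qed.

Lemma not_allp A (P : A -> Prop) l : ~ allp P l -> exl (fun x => ~ P x) l.
Proof.
elim: l => [|x l IH] /=; first tauto.
move=> H; case: (classic (P x)) => Px; [right; apply: IH; tauto | by left].
Qed.

Lemma exl_allp A (P : A -> Prop) l : exl (fun x => ~ P x) l -> ~ allp P l.
Proof. elim: l => [|x l IH] //= [nP [Px _]|/IH nA [_ Al]]; tauto. Qed.

Lemma allp_in (A : eqType) (P : A -> Prop) l : allp P l <-> (forall x, x \in l -> P x).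
Proof.
elim: l => [|x l IH] /=; first by split => // _ y.
rewrite IH; split.
- by move=> [Px Hl] y; rewrite in_cons => /orP [/eqP ->|/Hl].
- move=> H; split; first by apply: H; rewrite mem_head.
  by move=> y yl; apply: H; rewrite in_cons yl orbT.
Qed.

Lemma allp_or2 A B (Pa : A -> Prop) (Pb : B -> Prop) la lb :
  allp (fun a => allp (fun b => Pa a \/ Pb b) lb) la <-> allp Pa la \/ allp Pb lb.
Proof.
split.
- move=> H; case: (classic (allp Pa la)) => Ha; first by left.
  right; move: (not_allp Ha) H; elim: la {Ha} => [|a la IH] //= [nPa|ex] [Hb Hr].
  + by apply: allp_impl Hb => b [].
  + exact: IH.
- case=> H.
  + by apply: allp_impl H => a Ha; elim: lb => //= b lb IH; tauto.
  + elim: la => //= a la IH; split => //; apply: allp_impl H => b; tauto.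
Qed.

Section Heyt.
Variables (L : lang) (d : Order.disp_t) (H : tbLatticeType d) (imp : H -> H -> H).
Hypothesis Himp : heyting_imp imp.
Variable S : H -> Prop.
Hypothesis HS : subreduct L imp S.

Definition meetl (l : seq H) : H := foldr (fun x y => x `&` y) \top l.
Definition impsH (l : seq H) (c : H) : H := foldr imp c l.

Lemma le_imp a b c : (c <= imp a b) = (c `&` a <= b).
Proof. by rewrite Himp. Qed.

Lemma imp_mp a b : a `&` imp a b <= b.
Proof. by rewrite meetC -le_imp. Qed.

Lemma imp_top a b : a <= b -> imp a b = \top.
Proof. move=> ab; apply/le_anti; rewrite lex1 le_imp /=; exact: leIxr. Qed.

Lemma le_impr a b : b <= imp a b.
Proof. by rewrite le_imp leIl. Qed.

Lemma le_impsH l c x : (x <= impsH l c) = (x `&` meetl l <= c).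
Proof.
elim: l x => [|a l IH] x /=; first by rewrite meetx1.
by rewrite le_imp IH meetA.
Qed.

Lemma meetl_cat l1 l2 : meetl (l1 ++ l2) = meetl l1 `&` meetl l2.
Proof. elim: l1 => [|a l IH] /=; [by rewrite meetC meetx1 | by rewrite IH meetA]. Qed.

Lemma S_top : S \top.
Proof.
case: HS => [[a Sa] [Simp _]].
by rewrite -(imp_top (lexx a)); apply: Simp.
Qed.

Lemma S_imp a b : S a -> S b -> S (imp a b).
Proof. by case: HS => _ [Simp _]; apply: Simp. Qed.

Lemma S_impsH l c : allp S l -> S c -> S (impsH l c).
Proof. elim: l => [|a l IH] //= [Sa Sl] Sc; apply: S_imp => //; exact: IH. Qed.

Lemma imp_top_bot : imp \top \bot = \bot.
Proof. apply/le_anti; rewrite le0x andbT -[X in X <= _]meetx1 -le_imp //. Qed.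

Lemma S_bot_neg : l_neg L -> S \bot.
Proof.
case: HS => _ [_ [_ [_ [Sneg _]]]] ln.
rewrite -imp_top_bot; apply: Sneg => //; exact: S_top.
Qed.

Lemma S_bot_zero : l_zero L -> S \bot.
Proof. by case: HS => _ [_ [_ [_ [_ [Sz _]]]]]. Qed.

Lemma S_join a b : l_or L -> S a -> S b -> S (a `|` b).
Proof. by case: HS => _ [_ [_ [Sor _]]] lo; apply: Sor. Qed.

Definition filt (F : H -> Prop) := impl_filter imp S F.

Lemma filtS F : filt F -> forall a, F a -> S a.
Proof. by case. Qed.
Lemma filt_top F : filt F -> F \top.
Proof. by case. Qed.
Lemma filt_mp F a b : filt F -> S a -> S b -> F a -> F (imp a b) -> F b.
Proof. by case=> _ _ H0; apply: H0. Qed.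

Lemma filt_chain F l c : filt F -> allp F l -> S c -> F (impsH l c) -> F c.
Proof.
move=> fF; elim: l => [|a l IH] //= [Fa Fl] Sc Fi.
apply: IH => //; apply: (filt_mp fF _ _ Fa Fi); first exact: filtS Fa.
apply: S_impsH => //; exact: allp_impl (filtS fF) Fl.
Qed.

Lemma filt_cons F l s : filt F -> allp F l -> meetl l <= s -> S s -> F s.
Proof.
move=> fF Fl ls Ss; apply: (filt_chain fF Fl Ss).
rewrite (_ : impsH l s = \top); first exact: filt_top.
by apply/le_anti; rewrite lex1 le_impsH /=; apply: leIxr.
Qed.

Lemma filt_up F a b : filt F -> F a -> a <= b -> S b -> F b.
Proof.
move=> fF Fa ab Sb; apply: (filt_cons (l := [:: a])) => //=.
by rewrite meetx1.
Qed.

Lemma meetl_le l x : allp (fun y => x <= y) l -> x <= meetl l.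
Proof. elim: l => [|a l IH] /=; [by rewrite lex1 | by move=> [xa /IH xl]; rewrite lexI xa xl]. Qed.

Lemma meetl_in l x : List.In x l -> meetl l <= x.
Proof. elim: l => [|a l IH] //= [->|/IH]; [exact: leIl | exact: leIxr]. Qed.

Definition J (F T : H -> Prop) (c : H) : Prop :=
  S c /\ exists A B, allp F A /\ allp T B /\ meetl A `&` meetl B <= c.

Lemma J_filt F T : filt F -> filt (J F T).
Proof.
move=> fF; split.
- by move=> a [].
- by split; [exact: S_top | exists [::], [::]; rewrite lex1].
- move=> a b Sa Sb [_ [A1 [B1 [FA1 [TB1 le1]]]]] [_ [A2 [B2 [FA2 [TB2 le2]]]]].
  split => //; exists (A1 ++ A2), (B1 ++ B2); rewrite !allp_cat !meetl_cat; do !split => //.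
  apply: le_trans (imp_mp a b); rewrite lexI; apply/andP; split.
  + apply: le_trans le1; apply: leI2; exact: leIl.
  + apply: le_trans le2; apply: leI2; exact: leIr.
Qed.

Lemma J_inF F T a : filt F -> F a -> J F T a.
Proof.
move=> fF Fa; split; first exact: filtS Fa.
by exists [:: a], [::] => /=; rewrite meetx1 meetx1 lexx.
Qed.

Lemma J_inT F T a : T a -> S a -> J F T a.
Proof. by move=> Ta Sa; split => //; exists [::], [:: a] => /=; rewrite meetx1 meetC meetx1 lexx. Qed.

Lemma J_least F T G : filt G -> (forall a, F a -> G a) -> (forall a, T a -> G a) ->
  forall a, J F T a -> G a.
Proof.
move=> fG FG TG a [Sa [A [B [FA [TB le]]]]].
apply: (filt_cons (l := A ++ B)) => //; last by rewrite meetl_cat.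
by rewrite allp_cat; split; [apply: allp_impl FA | apply: allp_impl TB].
Qed.


Definition mi F := mi_filter imp S F.

Lemma mi_filt F : mi F -> filt F.
Proof. by case. Qed.

Lemma mi_proper F : mi F -> exists2 a, S a & ~ F a.
Proof. by case. Qed.

Lemma mi_irr F G1 G2 : mi F -> filt G1 -> filt G2 -> (forall a, F a <-> G1 a /\ G2 a) ->
  (forall a, F a <-> G1 a) \/ (forall a, F a <-> G2 a).
Proof. by case=> _ _ H0; apply: H0. Qed.

Lemma mi_nbot F : mi F -> ~ F \bot.
Proof.
move=> mF Fb; case: (mi_proper mF) => a Sa; apply.
exact: (filt_up (mi_filt mF) Fb (le0x a)).
Qed.

Lemma exl_allpS A (P : A -> Prop) (Q : A -> Prop) l : allp P l -> exl Q l -> exists x, P x /\ Q x.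
Proof. elim: l => [|x l IH] //= [Px Pl] [Qx|/IH]; [by exists x | exact]. Qed.

Lemma allp_and A (P Q : A -> Prop) l : allp P l -> allp Q l -> allp (fun x => P x /\ Q x) l.
Proof. elim: l => //= x l IH [? ?] [? ?]; split; [done | exact: IH]. Qed.

Lemma extend K (Es : seq H -> Prop) : filt K -> (forall E, Es E -> allp S E) -> (exists E, Es E) ->
  (forall E1 E2, Es E1 -> Es E2 -> exists E, Es E /\
      forall F, filt F -> allp F E1 \/ allp F E2 -> allp F E) ->
  ~ (exists E, Es E /\ allp K E) ->
  exists F, [/\ mi F, (forall s, K s -> F s) & ~ (exists E, Es E /\ allp F E)].
Proof.
move=> fK EsS [E0 EsE0] Esj nbK.
pose good B := [/\ filt B, (forall s, K s -> B s) & ~ (exists E, Es E /\ allp B E)].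
pose P (B : H -> Prop) := (forall x, ~ B x) \/ good B.
have gK : good K by split.
have := @classical_sets.Zorn_bigcup H P.
case.
- move=> Fm sub tot.
  have gX : forall X x, Fm X -> X x -> good X.
    by move=> X x FX Xx; case: (sub X FX) => // /(_ x).
  case: (classic (exists X, Fm X /\ exists x, X x)); last first.
    by move=> nX; left => x [X FX Xx]; apply: nX; exists X; split => //; exists x.
  move=> [X0 [FX0 [x0 X0x0]]]; right.
  have gX0 := gX _ _ FX0 X0x0.
  have fin : forall E, allp (classical_sets.bigcup Fm (fun X => X)) E ->
      exists X, [/\ Fm X, good X & allp X E].
    elim => [|e E IH] /=; first by move=> _; exists X0.
    move=> [[Xe FXe Xee] /IH [X' [FX' gX' X'E]]].
    case: (tot _ _ FXe FX') => sub'.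
    + exists X'; split => //=; split => //; exact: sub'.
    + exists Xe; split => //; first exact: gX Xee.
      split => //; apply: allp_impl X'E; exact: sub'.
  split.
  + split.
    * by move=> a [X FX Xa]; case: (gX _ _ FX Xa) => fX _ _; exact: filtS fX a Xa.
    * by exists X0 => //; case: gX0 => fX _ _; exact: filt_top.
    * move=> a b Sa Sb [X1 FX1 X1a] [X2 FX2 X2b].
      case: (gX _ _ FX1 X1a) => f1 _ _; case: (gX _ _ FX2 X2b) => f2 _ _.
      case: (tot _ _ FX1 FX2) => sub'.
      - by exists X2 => //; apply: (filt_mp f2 Sa Sb) => //; exact: sub'.
      - by exists X1 => //; apply: (filt_mp f1 Sa Sb) => //; exact: sub'.
  + by move=> s Ks; exists X0 => //; case: gX0 => _ KX _; exact: KX.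
  + move=> [E [EsE /fin [X [FX [_ _ nb] XE]]]]; apply: nb; by exists E.
- move=> A [PA maxA].
  have gA : good A.
    case: PA => // emp; exfalso; apply: (maxA K); last by right.
    split; first by move=> x /emp.
    by move=> KA; apply: (emp \top); apply: KA; exact: filt_top.
  case: gA => fA KA nbA.
  exists A; split => //.
  split => //.
  + have: ~ allp A E0 by move=> AE0; apply: nbA; exists E0.
    move=> /not_allp /(exl_allpS (EsS _ EsE0)) [a [Sa nAa]]; by exists a.
  + move=> G1 G2 f1 f2 eqA.
    have key : forall G, filt G -> (forall a, A a -> G a) -> ~ (forall a, A a <-> G a) ->
        exists E, Es E /\ allp G E.
      move=> G fG AG nAG; apply: NNPP => nb.
      apply: (maxA G); last by right; split => // s /KA /AG.
      split => // GA; apply: nAG => a; split; [exact: AG | exact: GA].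
    case: (classic (forall a, A a <-> G1 a)) => h1; first by left.
    case: (classic (forall a, A a <-> G2 a)) => h2; first by right.
    exfalso.
    have [E1 [Es1 G1E1]] := key _ f1 (fun a Aa => proj1 (proj1 (eqA a) Aa)) h1.
    have [E2 [Es2 G2E2]] := key _ f2 (fun a Aa => proj2 (proj1 (eqA a) Aa)) h2.
    have [E [EsE HE]] := Esj _ _ Es1 Es2.
    apply: nbA; exists E; split => //.
    have := allp_and (HE _ f1 (or_introl G1E1)) (HE _ f2 (or_intror G2E2)).
    by apply: allp_impl => a /eqA.
Qed.

Lemma allp_In_self A (l : seq A) : allp (fun x => List.In x l) l.
Proof.
elim: l => //= a l IH; split; first by left.
by apply: allp_impl IH => x; right.
Qed.

Lemma prime_cap F G1 G2 : mi F -> filt G1 -> filt G2 -> (forall s, G1 s -> G2 s -> F s) ->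
  (forall s, G1 s -> F s) \/ (forall s, G2 s -> F s).
Proof.
move=> mF f1 f2 cap; have fF := mi_filt mF.
have := @mi_irr F (J F G1) (J F G2) mF (J_filt _ fF) (J_filt _ fF).
case.
- move=> a; split; first by move=> Fa; split; apply: J_inF.
  move=> [[Sa [A1 [B1 [FA1 [GB1 le1]]]]] [_ [A2 [B2 [FA2 [GB2 le2]]]]]].
  have SA1 : allp S A1 by apply: allp_impl FA1 => x; exact: filtS.
  have SA2 : allp S A2 by apply: allp_impl FA2 => x; exact: filtS.
  have Sw : S (impsH (A2 ++ A1) a) by apply: S_impsH => //; rewrite allp_cat.
  have v1 : G1 (impsH A1 a).
    apply: (filt_cons f1 GB1); last exact: S_impsH.
    by rewrite le_impsH meetC.
  have v2 : G2 (impsH A2 a).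
    apply: (filt_cons f2 GB2); last exact: S_impsH.
    by rewrite le_impsH meetC.
  have w1 : G1 (impsH (A2 ++ A1) a).
    apply: (filt_up f1 v1) => //; rewrite le_impsH meetl_cat.
    apply: (@le_trans _ _ (impsH A1 a `&` meetl A1)); last by rewrite -le_impsH.
    by apply: leI2 => //; exact: leIr.
  have w2 : G2 (impsH (A2 ++ A1) a).
    apply: (filt_up f2 v2) => //; rewrite le_impsH meetl_cat.
    apply: (@le_trans _ _ (impsH A2 a `&` meetl A2)); last by rewrite -le_impsH.
    by apply: leI2 => //; exact: leIl.
  apply: (filt_chain fF (l := A2 ++ A1)) => //; first by rewrite allp_cat.
  exact: cap.
- by move=> h; left => s G1s; apply/h; apply: J_inT => //; exact: filtS f1 s G1s.
- by move=> h; right => s G2s; apply/h; apply: J_inT => //; exact: filtS f2 s G2s.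
Qed.

Lemma filt_inter (I : Type) (f : I -> H -> Prop) (act : I -> Prop) (l : seq I) :
  (forall i, act i -> filt (f i)) -> filt (fun s => S s /\ allp (fun i => act i -> f i s) l).
Proof.
move=> ff; split.
- by move=> a [].
- split; first exact: S_top.
  by elim: l => //= i l IH; split => // ai; apply: filt_top; exact: ff.
- move=> a b Sa Sb [_ Ha] [_ Hab]; split => //.
  elim: l Ha Hab => //= i l IH [h1 h2] [h3 h4]; split; last exact: IH.
  move=> ai; exact: (filt_mp (ff i ai) Sa Sb (h1 ai) (h3 ai)).
Qed.

Lemma prime_list F (I : Type) (f : I -> H -> Prop) (act : I -> Prop) (l : seq I) :
  mi F -> (forall i, act i -> filt (f i)) ->
  (forall s, S s -> allp (fun i => act i -> f i s) l -> F s) ->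
  exl (fun i => act i /\ forall s, f i s -> F s) l.
Proof.
move=> mF ff; elim: l => [|i l IH] /=.
  by move=> h; case: (mi_proper mF) => a Sa; apply; exact: h.
move=> h; case: (classic (act i)) => ai; last first.
  by right; apply: IH => s Ss Hl; apply: h => //; split => // /ai.
have fI := filt_inter l ff.
case: (prime_cap mF (ff i ai) fI).
- move=> s fis [Ss Hl]; apply: h => //; split => //.
- by move=> h1; left; split.
- by move=> h1; right; apply: IH => s Ss Hl; apply: h1.
Qed.

Lemma prime_or F a b : mi F -> S a -> S b -> S (a `|` b) -> F (a `|` b) -> F a \/ F b.
Proof.
move=> mF Sa Sb Sab Fab; have fF := mi_filt mF.
pose Fa x c := S c /\ F (imp x c).
have fFa : forall x, S x -> filt (Fa x).
  move=> x Sx; split.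
  - by move=> c [].
  - split; first exact: S_top.
    by rewrite imp_top ?lex1 //; exact: filt_top.
  - move=> u v Su Sv [_ h1] [_ h2]; split => //.
    apply: (filt_cons (l := [:: imp x u; imp x (imp u v)])) => //=; last exact: S_imp.
    rewrite meetx1 le_imp.
    apply: le_trans (imp_mp u v); rewrite lexI; apply/andP; split.
    + apply: (@le_trans _ _ (imp x u `&` x)); first by apply: leI2 => //; exact: leIl.
      by rewrite -le_imp.
    + apply: (@le_trans _ _ (imp x (imp u v) `&` x)); first by apply: leI2 => //; exact: leIr.
      by rewrite -le_imp.
have inFa : forall x c, S x -> F c -> Fa x c.
  move=> x c Sx Fc; have Sc := filtS fF Fc; split => //.
  by apply: (filt_up fF Fc); [exact: le_impr | exact: S_imp].
case: (@mi_irr F (Fa a) (Fa b) mF (fFa a Sa) (fFa b Sb)).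
- move=> c; split; first by move=> Fc; split; apply: inFa.
  move=> [[Sc h1] [_ h2]].
  apply: (filt_cons (l := [:: a `|` b; imp a c; imp b c])) => //=.
  rewrite meetx1 -le_imp leUx; apply/andP; split; rewrite le_imp.
  + apply: (@le_trans _ _ (a `&` imp a c)); first by apply: leI2 => //; exact: leIl.
    exact: imp_mp.
  + apply: (@le_trans _ _ (b `&` imp b c)); first by apply: leI2 => //; exact: leIr.
    exact: imp_mp.
- move=> h; left; apply/h; split => //; rewrite imp_top //; exact: filt_top.
- move=> h; right; apply/h; split => //; rewrite imp_top //; exact: filt_top.
Qed.

Definition X := dual_space imp S.
Definition le := @dual_le d H imp S.
Definition pt (G : X) : H -> Prop := proj1_sig G.
Lemma mi_pt (G : X) : mi (pt G).
Proof. exact: proj2_sig G. Qed.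

Lemma imp_truth (F : X) l c : allp S l -> S c ->
  (pt F (impsH l c) <-> forall G : X, le F G -> allp (pt G) l -> pt G c).
Proof.
move=> Sl Sc; have fF := mi_filt (mi_pt F); split.
  move=> Fi G FG Gl; apply: (filt_chain (mi_filt (mi_pt G)) Gl Sc); exact: FG.
move=> h; apply: NNPP => nF.
pose K := J (pt F) (fun x => List.In x l).
have h1 : forall E, E = [:: c] -> allp S E by move=> E ->.
have h2 : exists E, E = [:: c] by exists [:: c].
have h3 : forall E1 E2, E1 = [:: c] -> E2 = [:: c] -> exists E, E = [:: c] /\
      forall F0, filt F0 -> allp F0 E1 \/ allp F0 E2 -> allp F0 E.
  by move=> E1 E2 -> ->; exists [:: c]; split => // F0 _ [].
have h4 : ~ (exists E, E = [:: c] /\ allp K E).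
  move=> [E [-> [[_ [A [B [FA [TB le1]]]]] _]]]; apply: nF.
  apply: (filt_cons fF FA) => //; last exact: S_impsH.
  rewrite le_impsH; apply: le_trans le1; apply: leI2 => //.
  by apply: meetl_le; apply: allp_impl TB => x; exact: meetl_in.
have [F' [mF' KF' nb]] := @extend K (fun E => E = [:: c]) (J_filt _ fF) h1 h2 h3 h4.
apply: nb; exists [:: c]; split => //=; split => //.
apply: (h (exist _ F' mF')).
+ by move=> a Fa; apply: KF'; exact: J_inF.
+ rewrite /pt /=; apply: allp_impl (allp_and (allp_In_self l) Sl) => x [Ix Sx].
  by apply: KF'; exact: J_inT.
Qed.

Lemma le_refl (x : X) : le x x.
Proof. by []. Qed.
Lemma le_tr (x y z : X) : le x y -> le y z -> le x z.
Proof. by move=> h1 h2 a /h1 /h2. Qed.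

Definition upv (V : Type) (W : V -> X -> Prop) := forall v, upset le (W v).

Lemma eval_up_upset V (W : V -> X -> Prop) : upv W -> forall p, upset le (eval_up le W p).
Proof.
move=> uW; elim => [v|a IHa b IHb|a IHa b IHb|a IHa b IHb|a IHa| |] x y xy //=.
- exact: uW.
- by move=> [/(IHa _ _ xy) ? /(IHb _ _ xy) ?].
- by move=> [/(IHa _ _ xy) ?|/(IHb _ _ xy) ?]; [left|right].
- by move=> h [z [yz hz]]; apply: h; exists z; split => //; exact: le_tr yz.
- by move=> h [z [yz hz]]; apply: h; exists z; split => //; exact: le_tr yz.
Qed.

Lemma eval_imps V (W : V -> X -> Prop) l c x : upv W ->
  (eval_up le W (imps l c) x <->
   forall x', le x x' -> allp (fun g => eval_up le W g x') l -> eval_up le W c x').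
Proof.
move=> uW; elim: l x => [|g l IH] x /=.
  split; first by move=> h x' xx' _; exact: eval_up_upset h.
  by move=> h; apply: h.
split.
- move=> h x' xx' [gx' lx']; apply: NNPP => nc; apply: h; exists x'; split => //; split => //.
  by rewrite IH => /(_ x' (@le_refl x') lx').
- move=> h [y [xy [gy ny]]]; apply: ny; rewrite IH => x' yx' lx'.
  apply: h; first exact: le_tr yx'.
  by split => //; exact: eval_up_upset gy.
Qed.

Lemma eval_up_map V V' (f : V -> V') (W : V' -> X -> Prop) p :
  eval_up le W (fm_map f p) = eval_up le (fun v => W (f v)) p.
Proof.
elim: p => [v|a IHa b IHb|a IHa b IHb|a IHa b IHb|a IHa| |] //=; by rewrite ?IHa ?IHb.
Qed.

Lemma eval_up_ext V (W1 W2 : V -> X -> Prop) : (forall v x, W1 v x <-> W2 v x) ->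
  forall p x, eval_up le W1 p x <-> eval_up le W2 p x.
Proof.
move=> hW; elim => [v|a IHa b IHb|a IHa b IHb|a IHa b IHb|a IHa| |] x //=.
- by rewrite IHa IHb.
- by rewrite IHa IHb.
- split => h [y [xy [h1 h2]]]; apply: h; exists y; rewrite IHa IHb in h1 h2 *; tauto.
- split => h [y [xy [h1 h2]]]; apply: h; exists y; rewrite IHa in h1 *; tauto.
Qed.

Lemma eval_mono V (W1 W2 : V -> X -> Prop) : (forall v x, W1 v x -> W2 v x) ->
  forall p b, polar b p -> forall x,
  if b then eval_up le W1 p x -> eval_up le W2 p x
  else eval_up le W2 p x -> eval_up le W1 p x.
Proof.
move=> hW; elim => [v|a IHa b IHb|a IHa b IHb|a IHa b IHb|a IHa| |] [] //= pol x.
- exact: hW.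
- case/andP: pol => /IHa h1 /IHb h2 [/h1 ? /h2 ?]; tauto.
- case/andP: pol => /IHa h1 /IHb h2 [/h1 ? /h2 ?]; tauto.
- case/andP: pol => /IHa h1 /IHb h2 [/h1 ?|/h2 ?]; tauto.
- case/andP: pol => /IHa h1 /IHb h2 [/h1 ?|/h2 ?]; tauto.
- case/andP: pol => /IHa h1 /IHb h2 h [y [xy [ay nby]]]; apply: h; exists y; split => //.
  by split; [exact: h1 | move=> /h2].
- case/andP: pol => /IHa h1 /IHb h2 h [y [xy [ay nby]]]; apply: h; exists y; split => //.
  by split; [exact: h1 | move=> /h2].
- move: pol => /IHa h1 h [y [xy [ay _]]]; apply: h; exists y; split => //; split => //; exact: h1.
- move: pol => /IHa h1 h [y [xy [ay _]]]; apply: h; exists y; split => //; split => //; exact: h1.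
Qed.

Lemma allp_forall A B (R : B -> Prop) (Q : A -> B -> Prop) l :
  allp (fun c => forall y, R y -> Q c y) l <-> forall y, R y -> allp (fun c => Q c y) l.
Proof.
elim: l => [|c l IH] /=; first tauto.
rewrite IH; split; [move=> [h1 h2] y Ry; split; [exact: h1|exact: h2] |].
move=> h; split => y Ry; by case: (h y Ry).
Qed.

Lemma allp_imp A (P : Prop) (Q : A -> Prop) l :
  allp (fun c => P -> Q c) l <-> (P -> allp Q l).
Proof.
elim: l => [|c l IH] /=; first tauto.
rewrite IH; tauto.
Qed.

Lemma up_bold (W : nat * nat -> X -> Prop) k : upv W -> forall p x,
  allp (fun g => eval_up le W g x) (bold k p) <->
  eval_up le (fun m G => allp (fun j => W (m, j) G) (iota 1 k)) p x.
Proof.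
move=> uW; elim => [m|a IHa b IHb|a IHa b IHb|a IHa b IHb|a IHa| |] x /=.
- by rewrite allp_map.
- by rewrite allp_cat IHa IHb.
- by rewrite allp_allpairs /= allp_or2 IHa IHb.
- rewrite allp_map (allp_iff _ (fun c => eval_imps _ c x uW)) allp_forall.
  split.
  + move=> h [y [xy [ay nby]]]; apply: nby; rewrite -IHb; move: (h y xy); rewrite allp_imp.
    by apply; rewrite IHa.
  + move=> h y xy; rewrite allp_imp => lay; rewrite IHb; apply: NNPP => nb; apply: h; exists y.
    by rewrite -IHa.
- rewrite eval_imps //; split.
  + move=> [h _] [y [xy [ay _]]]; apply: (h y xy); by rewrite IHa.
  + move=> h; split => // y xy lay; apply: h; exists y; split => //; split => //; by rewrite -IHa.
- split => // -[w [h _]]; apply: h; exists x; split => //; split => //.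
- split => // _; split => // -[y [_ [? ?]]]; tauto.
Qed.

Fixpoint good (g : fm (nat * nat)) : Prop :=
  match g with
  | FVar _ => True
  | FImp a b => good a /\ good b
  | FOr a b => l_or L /\ good a /\ good b
  | FZero => S \bot
  | _ => False
  end.

Fixpoint ok (p : fm nat) : Prop :=
  match p with
  | FVar _ => True
  | FAnd a b => ok a /\ ok b
  | FOr a b => l_or L /\ ok a /\ ok b
  | FImp a b => ok a /\ ok b
  | FNeg a => S \bot /\ ok a
  | FZero => S \bot
  | FOne => True
  end.

Lemma good_truth (v : nat * nat -> H) : (forall q, S (v q)) -> forall g, good g ->
  S (eval imp v g) /\
  forall G : X, pt G (eval imp v g) <-> eval_up le (fun q G => pt G (v q)) g G.
Proof.
move=> Sv; elim => [q|a IHa b IHb|a IHa b IHb|a IHa b IHb|a IHa| |] /=; try by move=> [].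
- move=> [lo [/IHa [Sa ha] /IHb [Sb hb]]]; split; first exact: S_join.
  move=> G; rewrite -ha -hb; split.
  + by apply: prime_or => //; [exact: mi_pt | exact: S_join].
  + have fG := mi_filt (mi_pt G).
    case=> h; apply: (filt_up fG h) => //; [exact: leUl | exact: S_join | exact: leUr | exact: S_join].
- move=> [/IHa [Sa ha] /IHb [Sb hb]]; split; first exact: S_imp.
  move=> G; have := @imp_truth G [:: eval imp v a] (eval imp v b) (conj Sa I) Sb.
  rewrite /impsH /= => ->; split.
  + move=> h [y [Gy [ay nby]]]; apply: nby; rewrite -hb; apply: h => //; split => //; by rewrite ha.
  + move=> h y Gy [ay _]; rewrite hb; apply: NNPP => nb; apply: h; exists y; split => //; split => //.
    by rewrite -ha.
- move=> Sb; split => // G; split => //; exact: mi_nbot (mi_pt G).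
Qed.

Lemma allp_true A (l : seq A) : allp (fun _ => True) l.
Proof. by elim: l. Qed.

Lemma good_imps l c : allp good l -> good c -> good (imps l c).
Proof. by elim: l => //= a l IH [ga gl] gc; split => //; exact: IH. Qed.

Lemma ok_bold k p : ok p -> allp good (bold k p).
Proof.
elim: p => [m|a IHa b IHb|a IHa b IHb|a IHa b IHb|a IHa| |] /=.
- by rewrite allp_map; move=> _; exact: allp_true.
- by move=> [/IHa ? /IHb ?]; rewrite allp_cat.
- move=> [lo [/IHa ha /IHb hb]]; rewrite allp_allpairs.
  by apply: allp_impl ha => x gx; apply: allp_impl hb => y gy.
- move=> [/IHa ha /IHb hb]; rewrite allp_map; apply: allp_impl hb => c gc.
  exact: good_imps.
- by move=> [Sb /IHa ha]; split => //; exact: good_imps.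
- by move=> Sb.
- by [].
Qed.

Lemma in_lang_ok p : in_lang L p -> ok p.
Proof.
elim: p => [m|a IHa b IHb|a IHa b IHb|a IHa b IHb|a IHa| |] //=.
- by case/andP => /andP [_ /IHa ?] /IHb ?.
- by case/andP => /andP [lo /IHa ?] /IHb ?.
- by case/andP => /IHa ? /IHb ?.
- by case/andP => ln /IHa ?; split => //; exact: S_bot_neg.
- exact: S_bot_zero.
Qed.

Definition UA (A : seq (nat * H)) (m : nat) (G : X) : Prop :=
  forall a, (m, a) \in A -> pt G a.
Definition kA (A : seq (nat * H)) := (size A).+1.
Definition vA (A : seq (nat * H)) (q : nat * nat) : H :=
  nth \top [seq x.2 | x <- A & x.1 == q.1] q.2.-1.
Definition EA (p : fm nat) A := map (eval imp (vA A)) (bold (kA A) p).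
Definition SA (A : seq (nat * H)) := forall x, x \in A -> S x.2.

Lemma vA_S A : SA A -> forall q, S (vA A q).
Proof.
move=> SAA q; rewrite /vA.
case: (ltnP q.2.-1 (size [seq x.2 | x <- A & x.1 == q.1])) => hs; last first.
  by rewrite nth_default //; exact: S_top.
move: (mem_nth \top hs) => /mapP [x]; rewrite mem_filter => /andP [_ xA] ->.
exact: SAA.
Qed.

Lemma UA_equiv A m G : UA A m G <-> allp (fun j => pt G (vA A (m, j))) (iota 1 (kA A)).
Proof.
rewrite allp_in /UA /vA /=; split.
- move=> h j _.
  case: (ltnP j.-1 (size [seq x.2 | x <- A & x.1 == m])) => hs; last first.
    by rewrite nth_default //; exact: filt_top (mi_filt (mi_pt G)).
  move: (mem_nth \top hs) => /mapP [x]; rewrite mem_filter => /andP [/eqP x1 xA] ->.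
  apply: h; by rewrite -x1 -surjective_pairing.
- move=> h a mA.
  have aL : a \in [seq x.2 | x <- A & x.1 == m].
    by apply/mapP; exists (m, a) => //; rewrite mem_filter eqxx.
  have := h (index a [seq x.2 | x <- A & x.1 == m]).+1.
  rewrite /= nth_index //; apply.
  rewrite -[1 :: iota 2 (size A)]/(iota 1 (size A).+1) mem_iota.
  have h1 : (index a [seq x.2 | x <- A & x.1 == m] < size [seq x.2 | x <- A & x.1 == m])%N.
    by rewrite index_mem.
  have h2 : (size [seq x.2 | x <- A & x.1 == m] <= size A)%N.
    by rewrite size_map size_filter count_size.
  by rewrite /= add1n !ltnS (leq_trans (ltnW h1) h2).
Qed.

Lemma allp_iff_on A (P Q R : A -> Prop) l : allp P l -> (forall x, P x -> (Q x <-> R x)) ->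
  (allp Q l <-> allp R l).
Proof. elim: l => //= x l IH [Px Pl] h; rewrite (h x Px) (IH Pl h) //. Qed.

Lemma E_spec A p : SA A -> ok p ->
  allp S (EA p A) /\ forall G : X, eval_up le (UA A) p G <-> allp (pt G) (EA p A).
Proof.
move=> SAA okp; have Sv := vA_S SAA; have gb := ok_bold (kA A) okp.
split.
  rewrite /EA allp_map; apply: allp_impl gb => g gg; exact: (proj1 (good_truth Sv gg)).
move=> G; rewrite /EA allp_map.
rewrite (allp_iff_on (R := fun g => eval_up le (fun q G => pt G (vA A q)) g G) gb); last first.
  by move=> g gg; exact: (proj2 (good_truth Sv gg)).
rewrite up_bold; last by move=> q x y xy; apply: xy.
apply: eval_up_ext => m x; rewrite UA_equiv //.
Qed.

Definition sub (A A' : seq (nat * H)) := forall q, q \in A -> q \in A'.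

Lemma sub_catl A1 A2 : sub A1 (A1 ++ A2).
Proof. by move=> q qA; rewrite mem_cat qA. Qed.
Lemma sub_catr A1 A2 : sub A2 (A1 ++ A2).
Proof. by move=> q qA; rewrite mem_cat qA orbT. Qed.

Lemma UA_sub A A' m G : sub A A' -> UA A' m G -> UA A m G.
Proof. by move=> s h a /s; apply: h. Qed.

Lemma mono_pos p A A' y : polar true p -> sub A A' ->
  eval_up le (UA A') p y -> eval_up le (UA A) p y.
Proof.
move=> pp s; have := @eval_mono _ (UA A') (UA A) _ p true pp y; apply.
by move=> m G; apply: UA_sub.
Qed.

Lemma mono_neg p A A' y : polar false p -> sub A A' ->
  eval_up le (UA A) p y -> eval_up le (UA A') p y.
Proof.
move=> pp s; have := @eval_mono _ (UA A') (UA A) _ p false pp y; apply.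
by move=> m G; apply: UA_sub.
Qed.

Lemma allp_self A (l : seq A) : allp (fun x => forall R : A -> Prop, allp R l -> R x) l.
Proof.
elim: l => //= x l IH; split; first by move=> R [].
by apply: allp_impl IH => y h R [_ Rl]; apply: h.
Qed.

Lemma lift E1 E : allp S E -> (forall G : X, allp (pt G) E1 -> allp (pt G) E) ->
  forall F, filt F -> allp F E1 -> allp F E.
Proof.
move=> SE h F fF FE1; apply: NNPP => nFE.
have [e [[Se me] nFe]] := exl_allpS (allp_and SE (allp_self E)) (not_allp nFE).
have h1 : forall E', E' = [:: e] -> allp S E' by move=> E' ->.
have h2 : exists E', E' = [:: e] by exists [:: e].
have h3 : forall E1 E2, E1 = [:: e] -> E2 = [:: e] -> exists E', E' = [:: e] /\
      forall F0, filt F0 -> allp F0 E1 \/ allp F0 E2 -> allp F0 E'.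
  by move=> ? ? -> ->; exists [:: e]; split => // F0 _ [].
have h4 : ~ (exists E', E' = [:: e] /\ allp F E') by move=> [E' [-> [? _]]].
have [F' [mF' KF' nb]] := @extend F (fun E' => E' = [:: e]) fF h1 h2 h3 h4.
apply: nb; exists [:: e]; split => //=; split => //.
apply: (me (pt (exist _ F' mF'))); apply: h; apply: allp_impl FE1; exact: KF'.
Qed.

Section Esakia.
Variable D : nat -> H -> Prop.
Hypothesis HD : forall m a, D m a -> S a.

Definition UD m (G : X) := forall a, D m a -> pt G a.
Definition subD (A : seq (nat * H)) := forall q, q \in A -> D q.1 q.2.

Lemma subD_SA A : subD A -> SA A.
Proof. by move=> h q /h; apply: HD. Qed.

Lemma subD_cat A1 A2 : subD A1 -> subD A2 -> subD (A1 ++ A2).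
Proof. by move=> h1 h2 q; rewrite mem_cat => /orP [/h1|/h2]. Qed.

Lemma subD_nil : subD [::].
Proof. by []. Qed.

Lemma UD_UA A m G : subD A -> UD m G -> UA A m G.
Proof. by move=> sA h a /sA; apply: h. Qed.

Lemma collect (T : Type) (Mono : T -> seq (nat * H) -> Prop) :
  (forall t A A', sub A A' -> Mono t A -> Mono t A') ->
  forall l, allp (fun t => exists A, subD A /\ Mono t A) l ->
  exists A, subD A /\ allp (fun t => Mono t A) l.
Proof.
move=> hM; elim => [|t l IH] /=; first by exists [::].
move=> [[A1 [s1 m1]] /IH [A2 [s2 m2]]]; exists (A1 ++ A2); split; first exact: subD_cat.
split; first by apply: hM m1; exact: sub_catl.
by apply: allp_impl m2 => t'; apply: hM; exact: sub_catr.
Qed.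

Lemma hard a c : ok a -> ok c -> polar true a -> polar false c ->
  (forall y, ~ eval_up le UD a y -> exists A, subD A /\ ~ eval_up le (UA A) a y) ->
  (forall y, eval_up le UD c y -> exists A, subD A /\ eval_up le (UA A) c y) ->
  forall G : X, ~ (exists y, le G y /\ eval_up le UD a y /\ ~ eval_up le UD c y) ->
  exists A, subD A /\ ~ (exists y, le G y /\ eval_up le (UA A) a y /\ ~ eval_up le (UA A) c y).
Proof.
move=> oka okc pa pc IHa IHc G hG; apply: NNPP => hneg.
have H0 : forall A, subD A -> exists y, le G y /\ eval_up le (UA A) a y /\ ~ eval_up le (UA A) c y.
  by move=> A sA; apply: NNPP => nn; apply: hneg; exists A.
pose T x := S x /\ exists A, subD A /\ forall y : X, eval_up le (UA A) a y -> pt y x.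
pose K := J (pt G) T.
pose Es E := exists A, subD A /\ E = EA c A.
have fG := mi_filt (mi_pt G).
have h1 : forall E, Es E -> allp S E.
  by move=> E [A [sA ->]]; exact: (proj1 (E_spec (subD_SA sA) okc)).
have h2 : exists E, Es E by exists (EA c [::]), [::].
have h3 : forall E1 E2, Es E1 -> Es E2 -> exists E, Es E /\
      forall F, filt F -> allp F E1 \/ allp F E2 -> allp F E.
  move=> E1 E2 [A1 [s1 ->]] [A2 [s2 ->]]; exists (EA c (A1 ++ A2)).
  have sA := subD_cat s1 s2.
  split; first by exists (A1 ++ A2).
  move=> F fF [] hF.
  - apply: (lift (E1 := EA c A1)) => //; first exact: (proj1 (E_spec (subD_SA sA) okc)).
    move=> G'; rewrite -(proj2 (E_spec (subD_SA s1) okc)) -(proj2 (E_spec (subD_SA sA) okc)).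
    apply: mono_neg => //; exact: sub_catl.
  - apply: (lift (E1 := EA c A2)) => //; first exact: (proj1 (E_spec (subD_SA sA) okc)).
    move=> G'; rewrite -(proj2 (E_spec (subD_SA s2) okc)) -(proj2 (E_spec (subD_SA sA) okc)).
    apply: mono_neg => //; exact: sub_catr.
have h4 : ~ (exists E, Es E /\ allp K E).
  move=> [E [[A0 [s0 ->]] KE]].
  pose Mono e A := forall y : X, le G y -> eval_up le (UA A) a y -> pt y e.
  have hM : forall e A A', sub A A' -> Mono e A -> Mono e A'.
    move=> e A A' s h y Gy ay; apply: h => //; exact: mono_pos ay.
  have [A1 [s1 M1]] : exists A, subD A /\ allp (fun e => Mono e A) (EA c A0).
    apply: collect => //; apply: allp_impl KE => e [Se [As [Bs [GAs [TBs le1]]]]].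
    pose Mono' x A := forall y : X, eval_up le (UA A) a y -> pt y x.
    have [Ae [se Me]] : exists A, subD A /\ allp (fun x => Mono' x A) Bs.
      apply: collect.
        move=> x A A' s h y ay; apply: h; exact: mono_pos ay.
      by apply: allp_impl TBs => x [_ [A [sA hA]]]; exists A.
    exists Ae; split => // y Gy ay.
    apply: (filt_cons (mi_filt (mi_pt y)) (l := As ++ Bs)) => //; last by rewrite meetl_cat.
    rewrite allp_cat; split; first by apply: allp_impl GAs => x /Gy.
    by apply: allp_impl Me => x; apply.
  have sA := subD_cat s0 s1.
  have [y [Gy [ay ncy]]] := H0 _ sA.
  apply: ncy; apply: (mono_neg (A := A0)) => //; first exact: sub_catl.
  rewrite (proj2 (E_spec (subD_SA s0) okc)).
  apply: allp_impl M1 => e; apply => //; apply: (mono_pos (A' := A0 ++ A1)) => //.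
  exact: sub_catr.
have [F' [mF' KF' nb]] := @extend K Es (J_filt _ fG) h1 h2 h3 h4.
pose Y : X := exist _ F' mF'.
apply: hG; exists Y; split; first by move=> x Gx; apply: KF'; exact: J_inF.
split.
- apply: NNPP => na; have [A [sA nA]] := IHa Y na; apply: nA.
  have [SE hE] := E_spec (subD_SA sA) oka.
  rewrite hE; apply: allp_impl (allp_and SE (allp_self (EA a A))) => x [Sx mx].
  apply: KF'; apply: J_inT => //; split => //; exists A; split => // y.
  by rewrite hE; apply: mx.
- move=> cY; have [A [sA cA]] := IHc Y cY; apply: nb; exists (EA c A); split.
    by exists A.
  by move: cA; rewrite (proj2 (E_spec (subD_SA sA) okc)).
Qed.

Lemma esakia p : ok p -> forall b, polar b p -> forall G : X,
  if b then ~ eval_up le UD p G -> exists A, subD A /\ ~ eval_up le (UA A) p G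
  else eval_up le UD p G -> exists A, subD A /\ eval_up le (UA A) p G.
Proof.
elim: p => [m|a IHa c IHc|a IHa c IHc|a IHa c IHc|a IHa| |] okp [] //= pol G.
- move=> nU; have [x [Dx nGx]] : exists x, D m x /\ ~ pt G x.
    by apply: NNPP => nn; apply: nU => x Dx; apply: NNPP => ng; apply: nn; exists x.
  exists [:: (m, x)]; split; first by move=> q; rewrite inE => /eqP ->.
  by move=> h; apply: nGx; apply: h; rewrite mem_head.
- case: okp => oka okc; case/andP: pol => pa pc.
  move=> h; case: (classic (eval_up le UD a G)) => ha.
  + have [A [sA nc]] := IHc okc true pc G (fun hc => h (conj ha hc)).
    by exists A; split => // -[].
  + have [A [sA na]] := IHa oka true pa G ha.
    by exists A; split => // -[].
- case: okp => oka okc; case/andP: pol => pa pc.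
  move=> [ha hc].
  have [A1 [s1 h1]] := IHa oka false pa G ha; have [A2 [s2 h2]] := IHc okc false pc G hc.
  exists (A1 ++ A2); split; first exact: subD_cat.
  split; [apply: mono_neg h1 => //; exact: sub_catl | apply: mono_neg h2 => //; exact: sub_catr].
- case: okp => _ [oka okc]; case/andP: pol => pa pc.
  move=> h.
  have [A1 [s1 h1]] := IHa oka true pa G (fun x => h (or_introl x)).
  have [A2 [s2 h2]] := IHc okc true pc G (fun x => h (or_intror x)).
  exists (A1 ++ A2); split; first exact: subD_cat.
  case; [move/(mono_pos pa (@sub_catl A1 A2)) | move/(mono_pos pc (@sub_catr A1 A2))]; by [].
- case: okp => _ [oka okc]; case/andP: pol => pa pc.
  case=> h.
  + have [A [sA hA]] := IHa oka false pa G h; by exists A; split => //; left.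
  + have [A [sA hA]] := IHc okc false pc G h; by exists A; split => //; right.
- case: okp => oka okc; case/andP: pol => pa pc.
  move=> h; have [y [Gy [ay ncy]]] : exists y, le G y /\ eval_up le UD a y /\ ~ eval_up le UD c y.
    exact: NNPP h.
  have [A1 [s1 h1]] := IHa oka false pa y ay.
  have [A2 [s2 h2]] := IHc okc true pc y ncy.
  exists (A1 ++ A2); split; first exact: subD_cat.
  move=> hn; apply: hn; exists y; split => //; split.
    apply: mono_neg h1 => //; exact: sub_catl.
  by move/(mono_pos pc (@sub_catr A1 A2)).
- case: okp => oka okc; case/andP: pol => pa pc.
  apply: hard => // y.
  + exact: (IHa oka true pa y).
  + exact: (IHc okc false pc y).
- case: okp => Sb oka.
  move=> h; have [y [Gy [ay _]]] : exists y, le G y /\ eval_up le UD a y /\ ~ False.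
    exact: NNPP h.
  have [A [sA hA]] := IHa oka false pol y ay.
  by exists A; split => // hn; apply: hn; exists y; split => //; split => //.
- case: okp => Sb oka.
  have := @hard a FZero oka Sb pol isT (fun y => IHa oka true pol y) (fun y (f : False) => False_ind _ f) G.
  exact.
- by move=> _; exists [::]; split => //; exact: subD_nil.
- by move=> _; exists [::]; split => //; exact: subD_nil.
Qed.

End Esakia.

Lemma neg_case a (U : nat -> X -> Prop) (G : X) : negative a -> ok a -> eval_up le U a G ->
  exists Vs Ns, [/\ allp (fun m => U m G) Vs,
    allp (fun n => [/\ negative n, ok n & eval_up le U n G]) Ns &
    forall W G', allp (fun m => W m G') Vs -> allp (fun n => eval_up le W n G') Ns ->
      eval_up le W a G'].
Proof. by move=> na oka ha; exists [::], [:: a]; split => //= W G' _ []. Qed.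

Lemma ante_dec a : sahl_ante a -> ok a -> forall (U : nat -> X -> Prop) (G : X), eval_up le U a G ->
  exists Vs Ns, [/\ allp (fun m => U m G) Vs,
    allp (fun n => [/\ negative n, ok n & eval_up le U n G]) Ns &
    forall W G', allp (fun m => W m G') Vs -> allp (fun n => eval_up le W n G') Ns ->
      eval_up le W a G'].
Proof.
elim: a => [m|a IHa c IHc|a IHa c IHc|a IHa c IHc|a IHa| |] sa oka U G ha;
  case/orP: sa => [na|sa]; try exact: neg_case; move: sa oka ha => /=.
- move=> _ _ hm; exists [:: m], [::]; split => //= W G' [] //.
- case/andP => sa sc [oka okc] [ha hc].
  have [Vs1 [Ns1 [h1 h2 h3]]] := IHa sa oka U G ha.
  have [Vs2 [Ns2 [h4 h5 h6]]] := IHc sc okc U G hc.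
  exists (Vs1 ++ Vs2), (Ns1 ++ Ns2); split; try by rewrite allp_cat.
  move=> W G'; rewrite !allp_cat => -[? ?] [? ?]; split; [exact: h3 | exact: h6].
- case/andP => sa sc [_ [oka okc]] [ha|hc].
  + have [Vs [Ns [h1 h2 h3]]] := IHa sa oka U G ha.
    by exists Vs, Ns; split => // W G' ? ?; left; apply: h3.
  + have [Vs [Ns [h1 h2 h3]]] := IHc sc okc U G hc.
    by exists Vs, Ns; split => // W G' ? ?; right; apply: h3.
all: try by [].
all: by move=> _ _ _; exists [::], [::].
Qed.

Lemma polar_imps b (Ns : seq (fm nat)) c : allp (polar (~~ b)) Ns -> polar b c -> polar b (imps Ns c).
Proof. by elim: Ns => //= n Ns IH [pn pN] pc; rewrite pn IH. Qed.

Lemma ok_imps Ns c : allp ok Ns -> ok c -> ok (imps Ns c).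
Proof. by elim: Ns => //= n Ns IH [pn pN] pc; split => //; apply: IH. Qed.

Definition dec_concl (U : nat -> X -> Prop) (s : fm nat) (G0 : X) :=
  exists (P : seq (nat * X)) (O : seq (X * fm nat)),
  [/\ allp (fun q => U q.1 q.2) P,
      allp (fun o => [/\ positive o.2, ok o.2 & ~ eval_up le U o.2 o.1]) O &
      forall W, upv W -> allp (fun q => W q.1 q.2) P ->
        allp (fun o => ~ eval_up le W o.2 o.1) O -> ~ eval_up le W s G0].

Lemma impl_aux a c (U : nat -> X -> Prop) (G0 y : X) : sahl_ante a -> ok a -> positive c -> ok c -> upv U ->
  le G0 y -> eval_up le U a y -> ~ eval_up le U c y ->
  exists (P : seq (nat * X)) (O : seq (X * fm nat)),
  [/\ allp (fun q => U q.1 q.2) P,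
      allp (fun o => [/\ positive o.2, ok o.2 & ~ eval_up le U o.2 o.1]) O &
      forall W, upv W -> allp (fun q => W q.1 q.2) P ->
        allp (fun o => ~ eval_up le W o.2 o.1) O ->
        exists y', [/\ le G0 y', eval_up le W a y' & ~ eval_up le W c y']].
Proof.
move=> sa oka pc okc uU Gy ay ncy.
have [Vs [Ns [h1 h2 h3]]] := ante_dec sa oka ay.
exists [seq (m, y) | m <- Vs], [:: (y, imps Ns c)]; split.
- by rewrite allp_map.
- split => //; split.
  + apply: polar_imps => //; apply: allp_impl h2 => n [].
    by rewrite /negative.
  + by apply: ok_imps => //; apply: allp_impl h2 => n [].
  + rewrite eval_imps // => h; apply: ncy; apply: h => //.
    by apply: allp_impl h2 => n [].
- move=> W uW; rewrite allp_map /= => hP [hO _].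
  move: hO; rewrite eval_imps // => hO.
  have [y' [yy' hN nc]] : exists y', [/\ le y y', allp (fun n => eval_up le W n y') Ns &
      ~ eval_up le W c y'].
    apply: NNPP => nn; apply: hO => y' yy' hN; apply: NNPP => nc; apply: nn; by exists y'.
  exists y'; split => //; first exact: le_tr yy'.
  apply: h3 => //; apply: allp_impl hP => m Wm; exact: (uW m y y').
Qed.

Lemma impl_dec s : sahl_impl s -> ok s -> forall U, upv U -> forall G0, ~ eval_up le U s G0 ->
  dec_concl U s G0.
Proof.
move=> si oks U uU G0 ns; case/orP: si => [ps|si].
  exists [::], [:: (G0, s)]; split; [by [] | by split; split | by move=> W _ _ []].
case: s si oks ns => //=.
- move=> a c /andP [sa pc] [oka okc] ns.
  have [y [Gy [ay ncy]]] : exists y, le G0 y /\ eval_up le U a y /\ ~ eval_up le U c y.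
    exact: NNPP ns.
  have [P [O [h1 h2 h3]]] := impl_aux sa oka pc okc uU Gy ay ncy.
  exists P, O; split => // W uW hP hO hn.
  have [y' [Gy' ay' ncy']] := h3 W uW hP hO; apply: hn; exists y'; split => //.
- move=> a sa [Sb oka] ns.
  have [y [Gy [ay _]]] : exists y, le G0 y /\ eval_up le U a y /\ ~ False.
    exact: NNPP ns.
  have [P [O [h1 h2 h3]]] := @impl_aux a FZero U G0 y sa oka isT Sb uU Gy ay id.
  exists P, O; split => // W uW hP hO hn.
  have [y' [Gy' ay' ncy']] := h3 W uW hP hO; apply: hn; exists y'; split => //.
Qed.

Lemma body_dec s : sahl_body s -> ok s -> forall U, upv U -> forall G0, ~ eval_up le U s G0 ->
  dec_concl U s G0.
Proof.
elim: s => [m|a IHa c IHc|a IHa c IHc|a IHa c IHc|a IHa| |] sb oks U uU G0 ns;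
  case/orP: sb => [si|sb]; try exact: impl_dec; move: sb oks ns => /=.
all: try by [].
- case/andP => sa sc [oka okc] ns.
  case: (classic (eval_up le U a G0)) => ha.
  + have nc : ~ eval_up le U c G0 by move=> hc; apply: ns.
    have [P [O [h1 h2 h3]]] := IHc sc okc U uU G0 nc.
    by exists P, O; split => // W uW hP hO [] _ hc; exact: (h3 W uW hP hO hc).
  + have [P [O [h1 h2 h3]]] := IHa sa oka U uU G0 ha.
    by exists P, O; split => // W uW hP hO [] hc _; exact: (h3 W uW hP hO hc).
- case/andP => sa sc [_ [oka okc]] ns.
  have [P1 [O1 [h1 h2 h3]]] := IHa sa oka U uU G0 (fun x => ns (or_introl x)).
  have [P2 [O2 [h4 h5 h6]]] := IHc sc okc U uU G0 (fun x => ns (or_intror x)).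
  exists (P1 ++ P2), (O1 ++ O2); split; try by rewrite allp_cat.
  move=> W uW; rewrite !allp_cat => -[hP1 hP2] [hO1 hO2] [hc|hc].
  + exact: (h3 W uW hP1 hO1 hc).
  + exact: (h6 W uW hP2 hO2 hc).
Qed.

Lemma dec_list phis (U : nat -> X -> Prop) (G0 : X) : upv U ->
  allp (fun p => sahl_body p /\ ok p) phis -> allp (fun p => ~ eval_up le U p G0) phis ->
  exists (P : seq (nat * X)) (O : seq (X * fm nat)),
  [/\ allp (fun q => U q.1 q.2) P,
      allp (fun o => [/\ positive o.2, ok o.2 & ~ eval_up le U o.2 o.1]) O &
      forall W, upv W -> allp (fun q => W q.1 q.2) P ->
        allp (fun o => ~ eval_up le W o.2 o.1) O -> allp (fun p => ~ eval_up le W p G0) phis].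
Proof.
move=> uU; elim: phis => [|p phis IH] /=; first by move=> _ _; exists [::], [::].
move=> [[sb okp] hph] [np nph].
have [P1 [O1 [h1 h2 h3]]] := body_dec sb okp uU np.
have [P2 [O2 [h4 h5 h6]]] := IH hph nph.
exists (P1 ++ P2), (O1 ++ O2); split; try by rewrite allp_cat.
move=> W uW; rewrite !allp_cat => -[hP1 hP2] [hO1 hO2]; split.
- exact: h3.
- exact: h6.
Qed.

Lemma eval_imps_H V (v : V -> H) l c :
  eval imp v (imps l c) = impsH (map (eval imp v) l) (eval imp v c).
Proof. by elim: l => //= g l ->. Qed.

Lemma eval_map V V' (f : V -> V') (v : V' -> H) p :
  eval imp v (fm_map f p) = eval imp (fun x => v (f x)) p.
Proof. by elim: p => //= [a -> b ->|a -> b ->|a -> b ->|a ->]. Qed.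

Lemma allp_In A (P : A -> Prop) l x : allp P l -> List.In x l -> P x.
Proof. by elim: l => //= y l IH [Py Pl] [<-|/IH]; [|apply]. Qed.

Lemma upv_UA A : upv (UA A).
Proof. by move=> m x y xy h a /h /xy. Qed.

Lemma core phis : allp (fun p => sahl_body p /\ ok p) phis ->
  (forall k, (0 < k)%N -> forall v : option (nat * nat) -> H, (forall o, S (v o)) ->
     eval imp v (APhi_k phis k) = \top) ->
  forall U, upv U -> forall G0 : X, allp (fun p => ~ eval_up le U p G0) phis -> False.
Proof.
move=> hph hyp U uU G0 nph.
have [P [O [hP hO hW]]] := dec_list uU hph nph.
pose D m s := S s /\ allp (fun q : nat * X => q.1 = m -> pt q.2 s) P.
have HD : forall m a, D m a -> S a by move=> m a [].
have UD_U : forall m G, UD D m G -> U m G.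
  move=> m G hG.
  have := @prime_list (pt G) (nat * X) (fun q => pt q.2) (fun q => q.1 = m) P (mi_pt G)
    (fun q _ => mi_filt (mi_pt q.2)) (fun s Ss hs => hG s (conj Ss hs)).
  move=> /(exl_allpS hP) [q [Uq [q1 qG]]]; rewrite -q1.
  by apply: (uU q.1 q.2 G) => // a /qG.
have P_UD : allp (fun q => UD D q.1 q.2) P.
  apply: allp_impl (allp_self P) => q hq s [Ss hs].
  exact: (hq (fun q' => q'.1 = q.1 -> pt q'.2 s) hs erefl).
have [A [sA hA]] : exists A, subD D A /\
    allp (fun o => positive o.2 /\ ~ eval_up le (UA A) o.2 o.1) O.
  apply: (collect (D := D)).
    by move=> o A A' s [po h]; split => // h'; apply: h; exact: mono_pos h'.
  apply: allp_impl hO => o [po oko no].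
  have nD : ~ eval_up le (UD D) o.2 o.1.
    move=> h; apply: no; have := @eval_mono _ (UD D) U UD_U o.2 true po o.1; apply; exact: h.
  have := @esakia D HD o.2 oko true po o.1 nD => /= -[A [sA' hA']].
  by exists A; split.
have SAA := subD_SA HD sA.
have nphA : allp (fun p => ~ eval_up le (UA A) p G0) phis.
  apply: hW; first exact: upv_UA.
    by apply: allp_impl P_UD => q h; exact: UD_UA sA h.
  by apply: allp_impl hA => o [].
have nE : allp (fun p => ok p /\ ~ allp (pt G0) (EA p A)) phis.
  apply: allp_impl (allp_and hph nphA) => p [[_ okp] np]; split => //.
  by rewrite -(proj2 (E_spec SAA okp)).
pose Jp p := J (pt G0) (fun x => List.In x (EA p A)).
have fG0 := mi_filt (mi_pt G0).
have [yv [Sy [nGy hJ]]] : exists yv, S yv /\ ~ pt G0 yv /\ allp (fun p => Jp p yv) phis.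
  apply: NNPP => nn.
  have prem : forall s, S s -> allp (fun p => True -> Jp p s) phis -> pt G0 s.
    move=> s Ss hs; apply: NNPP => ns; apply: nn; exists s; split => //; split => //.
    by apply: allp_impl hs => p; apply.
  have hex := @prime_list (pt G0) (fm nat) Jp (fun _ => True) phis (mi_pt G0)
    (fun p _ => J_filt _ fG0) prem. have [p [[okp nEp] [_ hsub]]] := exl_allpS nE hex.
  apply: nEp; apply: allp_impl (allp_and (proj1 (E_spec SAA okp)) (allp_In_self _)) => x [Sx Ix].
  by apply: hsub; exact: J_inT.
pose v (o : option (nat * nat)) := match o with None => yv | Some q => vA A q end.
have Sv : forall o, S (v o) by case => [q|]; [exact: (vA_S SAA q) | exact: Sy].
have := hyp (kA A) (ltn0Sn _) v Sv.
have e : forall p, eval imp v (imps (map (fm_map Some) (bold (kA A) p)) (FVar None)) =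
    impsH (EA p A) yv.
  move=> p; rewrite eval_imps_H -map_comp /EA; congr impsH; apply: eq_map => g /=.
  by rewrite eval_map.
rewrite /APhi_k eval_imps_H -map_comp (eq_map e) => htop.
have G0top := filt_top fG0; rewrite -htop in G0top.
apply: nGy; apply: (filt_chain fG0 _ Sy G0top).
rewrite allp_map; apply: allp_impl (allp_and nE hJ) => p [[okp _] Jpy].
rewrite imp_truth //; last exact: (proj1 (E_spec SAA okp)).
move=> G' G0G' hG'.
apply: (J_least (mi_filt (mi_pt G')) G0G' _ Jpy) => x Ix; exact: allp_In hG' Ix.
Qed.

Lemma all_allp A (f : A -> bool) l : all f l -> allp (fun x => f x) l.
Proof. by elim: l => //= x l IH /andP [? /IH]. Qed.

Lemma main phis y z : sahlqvist_qe L phis y z -> valid_sub_set imp S (APhi phis) ->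
  valid_up_set (@dual_le d H imp S) (APhi phis).
Proof.
move=> [_ _ _ hb hl] hyp p [k kp ->] V uV x.
have hph : allp (fun p => sahl_body p /\ ok p) phis.
  apply: allp_and (all_allp hb) _; apply: allp_impl (all_allp hl) => q; exact: in_lang_ok.
have hyp' : forall k, (0 < k)%N -> forall v : option (nat * nat) -> H, (forall o, S (v o)) ->
    eval imp v (APhi_k phis k) = \top.
  by move=> k' kp' v Sv; apply: hyp => //; exists k'.
rewrite /APhi_k eval_imps // => x' xx' hall; apply: NNPP => nY.
pose U m G := allp (fun j => V (Some (m, j)) G) (iota 1 k).
have uU : upv U by move=> m a b ab; apply: allp_impl => j; exact: uV _ a b ab.
apply: (core hph hyp' uU (G0 := x')).
move: hall; rewrite allp_map => hall; apply: allp_impl hall => p0 hp hu.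
apply: nY; move: hp; rewrite eval_imps // => hp; apply: (hp x' (@le_refl x')).
have uW : upv (fun q => V (Some q)) by move=> q; exact: uV.
have := proj2 (up_bold k uW p0 x') hu.
rewrite allp_map; apply: allp_impl => g; by rewrite eval_up_map.
Qed.

End Heyt.

Unset Implicit Arguments.

Theorem theorem9p6 (L : lang) (d : Order.disp_t) (H : tbLatticeType d)
  (imp : H -> H -> H) (Himp : heyting_imp imp)
  (S : H -> Prop) (HS : subreduct L imp S)
  (phis : seq (fm nat)) (y z : nat) (HPhi : sahlqvist_qe L phis y z) :
  valid_sub_set imp S (APhi phis) ->
  valid_up_set (@dual_le d H imp S) (APhi phis).
Proof. exact: (main Himp HS HPhi). Qed.
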